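(* Under Assumption (I), a function $\psi\in C_+(\mathbb S^{n-1})$ is invariant for the ODE $r_t=r_0+\int_0^t\bar b(r_s)ds$ if and only if $\bar b(\psi)=n^{-1}\psi/\mathrm{Leb}(\psi)$.
   Context: $n\ge2$; $\mathbb S^{n-1}$ with surface measure $\sigma$, $\omega_n=\sigma(\mathbb S^{n-1})$; $C_+(\mathbb S^{n-1})$ strictly positive continuous functions; $\mathrm{Leb}(r):=n^{-1}\int r^nd\sigma$. Rules: $\mathcal D(F)\subset C_+\times\mathbb R^n$ open with nonempty sections, measurable $F:\mathcal D(F)\to C_+$ with $F(r,x,\cdot)$ a probability density w.r.t. $\sigma$, measurable $H:C_+\times\mathbb S^{n-1}\to\mathbb R^n$ with $(r',H(r,\xi))\in\mathcal D(F)$ for $r'\ge r$, a.e. $\xi$. $y_{r,x}:=\omega_n\int r^{n-1}F(r,x,\cdot)d\sigma$, $b(r,x):=\omega_nF(r,x,\cdot)/y_{r,x}$. For fixed $r$, $(x^{1,r}_t)$ is the rate-one jump process on $\mathbb R^n$ that at each jump from $x$ moves to $H(r,\xi)$, with $\xi$ of density $F(r,x,\cdot)$; it is assumed to have a unique invariant probability measure $\nu_r$, and $\bar b(r):=\int b(r,x)d\nu_r(x)$. Assumption (I): for every $c>0$, $(r,x)\in\mathcal D(F)\Rightarrow(cr,cx)\in\mathcal D(F)$, $F(r,x,\cdot)=F(cr,cx,\cdot)$, $cH(r,\cdot)=H(cr,\cdot)$. $\psi\in C_+$ is invariant for the ODE if the solution started at $r_0=\psi$ is $r_t=(1+t/\mathrm{Leb}(\psi))^{1/n}\psi$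 for all $t\ge0$. *)

(* Defs.v *)
From HB Require Import structures.
From mathcomp Require Import all_boot all_order all_algebra.
From mathcomp Require Import all_classical all_reals all_analysis.
Set Implicit Arguments. Unset Strict Implicit. Unset Printing Implicit Defensive.
Import Order.TTheory GRing.Theory Num.Theory.
Import numFieldNormedType.Exports.
Local Open Scope classical_set_scope.
Local Open Scope ring_scope.

Section Defs.
Variables (R : realType) (n : nat).

Definition Rn : Type := g_sigma_algebraType (@open 'rV[R]_n).

Definition enorm (x : 'rV[R]_n) : R := Num.sqrt (\sum_(i < n) x ord0 i ^+ 2).
Definition sphere : set 'rV[R]_n := [set x | enorm x = 1].
(* the sphere as a type, with the subspace (initial) topology *)
Definition Sph : Type := set_type sphere.

Definition sext (g : Sph -> \bar R) (y : 'rV[R]_n) : \bar R :=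
  match pselect (y \in sphere) with
  | left h => g (exist _ y h)
  | right _ => 0%E
  end.

(* coordinate update and iterated (Tonelli) Lebesgue integral on R^n *)
Definition setc (x : 'rV[R]_n) (k : nat) (t : R) : 'rV[R]_n :=
  \row_j (if (j : nat) == k then t else x ord0 j).
Fixpoint iint (k : nat) (f : 'rV[R]_n -> \bar R) (x : 'rV[R]_n) : \bar R :=
  if k is k'.+1 then (\int[@lebesgue_measure R]_t iint k' f (setc x k' t))%E
  else f x.
Definition lebn (f : 'rV[R]_n -> \bar R) : \bar R := iint n f 0.

(* integral w.r.t. the surface measure sigma on S^{n-1}, defined through the
   polar-coordinates identity  int_S g dsigma = n * int_{0<|x|<=1} g(x/|x|) dx *)
Definition sint (g : Sph -> \bar R) : \bar R :=
  (n%:R%:E * lebn (fun x => if ((0 < enorm x) && (enorm x <= 1))%R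
                            then sext g (((enorm x)^-1)%R *: x) else 0%E))%E.

Definition omega : R := fine (sint (fun _ => 1%E)).

Definition snull (N : set Sph) : Prop :=
  measurable ((@set_val _ sphere) @` N : set Rn) /\
  sint (fun xi => (\1_N xi)%:E) = 0%E.
Definition sae (P : Sph -> Prop) : Prop :=
  exists N, snull N /\ forall xi, ~ N xi -> P xi.

Definition Cplus (r : Sph -> R) : Prop :=
  continuous r /\ forall xi, 0 < r xi.

Definition Leb (r : Sph -> R) : R :=
  fine ((n%:R^-1)%:E * sint (fun xi => (r xi ^+ n)%:E))%E.

Variables (D : (Sph -> R) -> 'rV[R]_n -> Prop)
          (F : (Sph -> R) -> 'rV[R]_n -> Sph -> R)
          (H : (Sph -> R) -> Sph -> 'rV[R]_n).

Definition Hext (r : Sph -> R) (y : Rn) : Rn :=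
  match pselect (y \in sphere) with
  | left h => H r (exist _ y h)
  | right _ => 0
  end.
Definition Fext (r : Sph -> R) (p : Rn * Rn) : R :=
  fine (sext (fun xi => (F r p.1 xi)%:E) p.2).

Definition rules : Prop :=
  (forall r x, D r x -> Cplus r) /\
  (forall r x, D r x -> exists2 e : R, 0 < e & forall r' x', Cplus r' ->
      (forall xi, `|r' xi - r xi| < e) -> `|x' - x| < e -> D r' x') /\
  (forall r, Cplus r -> exists x, D r x) /\
  (forall r x, D r x -> Cplus (F r x) /\ sint (fun xi => (F r x xi)%:E) = 1%E) /\
  (forall r, Cplus r -> measurable_fun [set p : Rn * Rn | D r p.1] (Fext r)) /\
  (forall r, Cplus r -> measurable_fun setT (Hext r)) /\
  (forall r r', Cplus r -> Cplus r' -> (forall xi, r xi <= r' xi) ->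
      sae (fun xi => D r' (H r xi))).

Definition yv (r : Sph -> R) (x : 'rV[R]_n) : R :=
  omega * fine (sint (fun xi => (r xi ^+ n.-1 * F r x xi)%:E)).
Definition b (r : Sph -> R) (x : 'rV[R]_n) (xi : Sph) : R :=
  omega * F r x xi / yv r x.

(* transition kernel of the jump chain of x^{1,r}: from x jump to H(r,xi),
   xi with density F(r,x,.) *)
Definition K (r : Sph -> R) (x : 'rV[R]_n) (A : set Rn) : \bar R :=
  sint (fun xi => (F r x xi * \1_A (H r xi : Rn))%:E).

(* invariant probability of the rate-one jump process x^{1,r}
   (generator L f(x) = int (f(H(r,xi)) - f(x)) F(r,x,xi) dsigma(xi)) *)
Definition invariant_prob (r : Sph -> R) (mu : probability Rn R) : Prop :=
  forall A : set Rn, measurable A ->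
    mu A = (\int[mu]_(x in [set x : Rn | D r x]) K r x A)%E.

Definition bbar (nu : (Sph -> R) -> probability Rn R) (r : Sph -> R) (xi : Sph)
  : \bar R :=
  (\int[nu r]_(x in [set x : Rn | D r x]) (b r x xi)%:E)%E.

Definition assumptionI : Prop :=
  forall c : R, 0 < c ->
    (forall r x, D r x -> D (fun xi => c * r xi) (c *: x)) /\
    (forall r x, D r x -> forall xi, F r x xi = F (fun xi => c * r xi) (c *: x) xi) /\
    (forall r, Cplus r -> forall xi, c *: H r xi = H (fun xi => c * r xi) xi).

Definition is_solution (bb : (Sph -> R) -> Sph -> \bar R) (psi : Sph -> R)
    (rt : R -> Sph -> R) : Prop :=
  rt 0 = psi /\ (forall t, 0 <= t -> Cplus (rt t)) /\
  forall t, 0 <= t -> forall xi,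
    ((rt t xi)%:E = (psi xi)%:E +
       \int[@lebesgue_measure R]_(s in [set s : R | (0 <= s <= t)%R]) bb (rt s) xi)%E.

Definition invariant_ode (bb : (Sph -> R) -> Sph -> \bar R) (psi : Sph -> R) : Prop :=
  is_solution bb psi (fun t xi => powR (1 + t / Leb psi) (n%:R^-1) * psi xi).

End Defs.

(* Main.v *)
Require Import Defs.
From HB Require Import structures.
From mathcomp Require Import all_boot all_order all_algebra.
From mathcomp Require Import all_classical all_reals all_analysis.
From mathcomp Require Import measurable_realfun ring lra.
Import Order.TTheory GRing.Theory Num.Theory.
Import numFieldNormedType.Exports.
Local Open Scope classical_set_scope.
Local Open Scope ring_scope.
Import HBNNSimple.

Section gen.
Local Open Scope ereal_scope.
Context d (T : measurableType d) (R : realType) (mu : {measure set T -> \bar R}).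

Lemma my_le_integral (D : set T) (f g : T -> \bar R) :
  (forall x, D x -> 0 <= f x) -> (forall x, D x -> f x <= g x) ->
  \int[mu]_(x in D) f x <= \int[mu]_(x in D) g x.
Proof.
move=> f0 fg.
have g0 : forall x, D x -> 0 <= g x by move=> x Dx; exact: le_trans (f0 x Dx) (fg x Dx).
rewrite (ge0_integralE mu f0) (ge0_integralE mu g0) /=.
apply: le_ereal_sup => _ [h hf <-]; exists h => //= x.
apply: le_trans (hf x) _; rewrite /patch; case: ifPn => // /set_mem Dx; exact: fg.
Qed.

Lemma my_integralZl_le (D : set T) (f : T -> \bar R) (k : R) : (0 < k)%R ->
  (forall x, D x -> 0 <= f x) ->
  \int[mu]_(x in D) (k%:E * f x) <= k%:E * \int[mu]_(x in D) f x.
Proof.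
move=> k0 f0.
have kf0 : forall x, D x -> 0 <= k%:E * f x.
  by move=> x Dx; apply: mule_ge0; [rewrite lee_fin ltW|exact: f0].
rewrite (ge0_integralE mu kf0) /=.
apply: ge_ereal_sup => _ [h hf <-] /=.
have -> : sintegral mu h = \int[mu]_(x in setT) (h x)%:E.
  by rewrite integral_nnsfun ?patch_setT.
rewrite (eq_integral (fun x => k%:E * (k^-1 * h x)%:E)); last first.
  by move=> x _; rewrite -EFinM mulrA divff ?gt_eqF// mul1r.
rewrite (@ge0_integralZl_EFin _ _ _ mu setT measurableT (fun x => (k^-1 * h x)%:E)); last 3 first.
- by move=> x _; rewrite lee_fin; apply: mulr_ge0; [rewrite invr_ge0 ltW|apply: fun_ge0].
- apply/measurable_EFinP; apply: measurable_funM => //.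
- exact: ltW.
rewrite lee_pmul2l ?lte_fin //.
rewrite [leRHS]integral_mkcond.
apply: my_le_integral => [x _|x _]; first by rewrite lee_fin; apply: mulr_ge0; [rewrite invr_ge0 ltW|apply: fun_ge0].
have := hf x; rewrite /patch; case: ifPn => _ hx.
  by rewrite -(@lee_pmul2l _ k%:E) ?lte_fin// -EFinM mulrA divff ?gt_eqF// mul1r.
by rewrite -(@lee_pmul2l _ k%:E) ?lte_fin// -EFinM mulrA divff ?gt_eqF// mul1r mule0.
Qed.

Lemma my_integralZl (D : set T) (f : T -> \bar R) (k : R) : (0 < k)%R ->
  (forall x, D x -> 0 <= f x) ->
  \int[mu]_(x in D) (k%:E * f x) = k%:E * \int[mu]_(x in D) f x.
Proof.
move=> k0 f0; apply/eqP; rewrite eq_le my_integralZl_le //=.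
have kf0 : forall x, D x -> 0 <= k%:E * f x.
  by move=> x Dx; apply: mule_ge0; [rewrite lee_fin ltW|exact: f0].
have := @my_integralZl_le _ _ k^-1 ltac:(by rewrite invr_gt0) kf0.
rewrite (eq_integral f); last first.
  by move=> x _; rewrite muleA -EFinM mulVf ?gt_eqF// mul1e.
move=> H; rewrite -(@lee_pmul2l _ k^-1%:E) ?lte_fin ?invr_gt0//.
by rewrite muleA -EFinM mulVf ?gt_eqF// mul1e.
Qed.
End gen.


Section covs.
Local Open Scope ereal_scope.
Lemma cov_le d1 d2 (X : measurableType d1) (Y : measurableType d2) (R : realType)
  (mu : {measure set X -> \bar R}) (nu : {measure set Y -> \bar R})
  (phi : X -> Y) (mphi : measurable_fun setT phi)
  (hnu : forall A, measurable A -> nu A = mu (phi @^-1` A))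
  (D : set Y) (f : Y -> \bar R) :
  (forall y, D y -> 0 <= f y) ->
  \int[nu]_(y in D) f y <= \int[mu]_(x in phi @^-1` D) f (phi x).
Proof.
move=> f0.
rewrite (ge0_integralE nu f0) /=.
apply: ge_ereal_sup => _ [h hf <-] /=.
have h0 : {in setT, forall y, 0 <= (EFin \o h) y}.
  by move=> y _; rewrite /= lee_fin fun_ge0.
have mh : measurable_fun setT (EFin \o h).
  by apply/measurable_EFinP; exact: measurable_funPT.
have E := ge0_integral_pushforward mphi mu measurableT mh h0.
rewrite (eq_measure_integral nu) in E; last first.
  by move=> A mA _; rewrite hnu.
have -> : sintegral nu h = \int[nu]_(y in setT) (h y)%:E.
  by rewrite integral_nnsfun ?patch_setT.
rewrite E preimage_setT [leRHS]integral_mkcond.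
apply: my_le_integral => [x _|x _]; first by rewrite /= lee_fin fun_ge0.
have := hf (phi x); rewrite /patch /=.
by case: ifPn.
Qed.

Lemma cov_eq d1 d2 (X : measurableType d1) (Y : measurableType d2) (R : realType)
  (mu : {measure set X -> \bar R}) (nu : {measure set Y -> \bar R})
  (phi : X -> Y) (psi : Y -> X) (mphi : measurable_fun setT phi)
  (mpsi : measurable_fun setT psi)
  (psiK : forall x, psi (phi x) = x) (phiK : forall y, phi (psi y) = y)
  (hnu : forall A, measurable A -> nu A = mu (phi @^-1` A))
  (D : set Y) (f : Y -> \bar R) :
  (forall y, D y -> 0 <= f y) ->
  \int[nu]_(y in D) f y = \int[mu]_(x in phi @^-1` D) f (phi x).
Proof.
move=> f0; apply/eqP; rewrite eq_le cov_le //=.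
have hmu : forall A, measurable A -> mu A = nu (psi @^-1` A).
  move=> A mA; rewrite hnu; last first.
    by rewrite -[_ @^-1` _]setTI; exact: mpsi.
  by congr (mu _); apply/seteqP; split => x /=; rewrite psiK.
have := @cov_le _ _ _ _ _ nu mu psi mpsi hmu (phi @^-1` D) (fun x => f (phi x)) (fun x Dx => f0 _ Dx).
have -> : psi @^-1` (phi @^-1` D) = D.
  by apply/seteqP; split => y /=; rewrite phiK.
by under [X in _ <= X -> _]eq_integral do rewrite phiK.
Qed.

End covs.


Section P1.
Local Open Scope ereal_scope.
Context (R : realType) (n : nat).

Lemma iint_ge0 k (f : 'rV[R]_n -> \bar R) x : (forall y, 0 <= f y) -> 0 <= iint k f x.
Proof.
move=> f0; elim: k x => [|k IH] x /=; first exact: f0.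
by apply: integral_ge0 => t _; exact: IH.
Qed.

Lemma iint_scale k (f : 'rV[R]_n -> \bar R) x (c : R) : (0 < c)%R ->
  (forall y, 0 <= f y) -> iint k (fun y => c%:E * f y) x = c%:E * iint k f x.
Proof.
move=> c0 f0; elim: k x => [|k IH] x //=.
under eq_integral do rewrite IH.
by rewrite my_integralZl // => t _; exact: iint_ge0.
Qed.

Lemma sext_ge0 (g : Sph R n -> \bar R) y : (forall xi, 0 <= g xi) -> 0 <= sext g y.
Proof. by move=> g0; rewrite /sext; case: pselect. Qed.

Lemma sint_ge0 (g : Sph R n -> \bar R) : (forall xi, 0 <= g xi) -> 0 <= sint g.
Proof.
move=> g0; rewrite /sint; apply: mule_ge0; first by rewrite lee_fin.
apply: iint_ge0 => y; case: ifPn => // _; exact: sext_ge0.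
Qed.

Lemma sint_scale (g : Sph R n -> \bar R) (c : R) : (0 < c)%R ->
  (forall xi, 0 <= g xi) -> sint (fun xi => c%:E * g xi) = c%:E * sint g.
Proof.
move=> c0 g0; rewrite /sint /lebn.
rewrite muleCA; congr (_ * _).
rewrite -iint_scale //; last by move=> y; case: ifPn => // _; exact: sext_ge0.
congr (iint _ _ _); apply: funext => y; case: ifPn => _; last by rewrite mule0.
by rewrite /sext; case: pselect => //; rewrite mule0.
Qed.
End P1.


Section P2.
Context (R : realType) (n : nat).
Variable (F : (Sph R n -> R) -> 'rV[R]_n -> Sph R n -> R).

Lemma fine_scale (c : R) (e : \bar R) : 0 < c -> fine (c%:E * e)%E = c * fine e.
Proof.
move=> c0; case: e => [r||] //=.
- by rewrite gt0_muley ?lte_fin // mulr0.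
- by rewrite gt0_muleNy ?lte_fin // mulr0.
Qed.

Lemma omega_ge0 : 0 <= omega R n.
Proof. by apply: fine_ge0; apply: sint_ge0. Qed.

Lemma yv_ge0 r x : (forall xi, 0 < r xi) -> (forall xi, 0 <= F r x xi) -> 0 <= yv F r x.
Proof.
move=> r0 F0; rewrite /yv; apply: mulr_ge0; first exact: omega_ge0.
apply: fine_ge0; apply: sint_ge0 => xi.
by rewrite lee_fin; apply: mulr_ge0 => //; apply: exprn_ge0; apply: ltW.
Qed.

Lemma b_ge0 r x xi : (forall xi, 0 < r xi) -> (forall xi, 0 <= F r x xi) -> 0 <= b F r x xi.
Proof.
move=> r0 F0; rewrite /b; apply: divr_ge0; last exact: yv_ge0.
by apply: mulr_ge0 => //; exact: omega_ge0.
Qed.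

Lemma yv_scale (c : R) r x : 0 < c -> (forall xi, 0 < r xi) -> (forall xi, 0 <= F r x xi) ->
  (forall xi, F (fun xi => c * r xi) (c *: x) xi = F r x xi) ->
  yv F (fun xi => c * r xi) (c *: x) = c ^+ n.-1 * yv F r x.
Proof.
move=> c0 r0 F0 hF; rewrite /yv.
rewrite (_ : (fun xi => _) = (fun xi => (c ^+ n.-1)%:E * ((r xi ^+ n.-1 * F r x xi)%:E))%E); last first.
  by apply: funext => xi; rewrite hF exprMn -EFinM mulrA.
have cn : 0 < c ^+ n.-1 by rewrite exprn_gt0.
rewrite sint_scale //; last first.
  by move=> xi; rewrite lee_fin; apply: mulr_ge0 => //; apply: exprn_ge0; apply: ltW.
by rewrite (fine_scale _ _ cn) mulrCA.
Qed.

Lemma b_scale (c : R) r x xi : 0 < c -> (forall xi, 0 < r xi) -> (forall xi, 0 <= F r x xi) ->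
  (forall xi, F (fun xi => c * r xi) (c *: x) xi = F r x xi) ->
  b F (fun xi => c * r xi) (c *: x) xi = (c ^+ n.-1)^-1 * b F r x xi.
Proof.
move=> c0 r0 F0 hF; rewrite /b hF yv_scale // invfM.
by rewrite !mulrA [_ * (c ^+ n.-1)^-1]mulrC !mulrA.
Qed.
End P2.


Section P3.
Context (R : realType) (n : nat).

Definition scl (c : R) (x : Rn R n) : Rn R n := (c *: (x : 'rV[R]_n)).

Lemma scl_measurable c : measurable_fun setT (scl c).
Proof.
apply: (@measurability _ _ _ _ setT (scl c) (@open 'rV[R]_n)) => //.
move=> _ [A oA <-]; apply: sub_gen_smallest; rewrite setTI.
have hc : continuous (fun x : 'rV[R]_n => c *: x).
  exact: scaler_continuous.
have := (proj1 (continuousP _) hc) A oA.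
exact.
Qed.

HB.instance Definition _ (c : R) :=
  isMeasurableFun.Build _ _ (Rn R n) (Rn R n) (scl c) (scl_measurable c).

Definition pushp (mu : probability (Rn R n) R) (c : R) : probability (Rn R n) R :=
  distribution mu (scl c).

Lemma pushpE mu c A : pushp mu c A = mu (scl c @^-1` A).
Proof. by []. Qed.
End P3.
Arguments scl {R n}.
Arguments pushp {R n}.


Section P4.
Context (R : realType) (n : nat).
Variables (D : (Sph R n -> R) -> 'rV[R]_n -> Prop)
    (F : (Sph R n -> R) -> 'rV[R]_n -> Sph R n -> R)
    (H : (Sph R n -> R) -> Sph R n -> 'rV[R]_n)
    (nu : (Sph R n -> R) -> probability (Rn R n) R).
Hypothesis hrules : rules D F H.
Hypothesis hinv : forall r, Cplus r -> invariant_prob D F H r (nu r).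
Hypothesis huniq : forall r, Cplus r -> forall mu : probability (Rn R n) R,
      invariant_prob D F H r mu -> forall A, measurable A -> mu A = nu r A.
Hypothesis hI : assumptionI D F H.

Lemma Cplus_scale (psi : Sph R n -> R) c : 0 < c -> Cplus psi -> Cplus (fun xi => c * psi xi).
Proof.
move=> c0 [cpsi ppsi]; split; last by move=> xi; rewrite mulr_gt0.
move=> x; apply: continuousM; [apply: cst_continuous|exact: cpsi].
Qed.

Lemma F_ge0 r x xi : D r x -> 0 <= F r x xi.
Proof.
move: hrules => [_ [_ [_ [h4 _]]]] Dx.
by have [[_ +] _] := h4 r x Dx => /(_ xi) /ltW.
Qed.

Lemma r_gt0 r x xi : D r x -> 0 < r xi.
Proof.
move: hrules => [h1 _] Dx.
by have [_ +] := h1 r x Dx; apply.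
Qed.

Lemma Dset (psi : Sph R n -> R) c : 0 < c ->
  scl c @^-1` [set x : Rn R n | D (fun xi => c * psi xi) x] = [set x : Rn R n | D psi x].
Proof.
move=> c0; apply/seteqP; split => x /=.
  have ci : 0 < c^-1 by rewrite invr_gt0.
  move=> /((hI _ ci).1) /=.
  rewrite /scl scalerA mulVf ?gt_eqF // scale1r.
  by rewrite (_ : (fun xi => _) = psi) //; apply: funext => xi; rewrite mulrA mulVf ?gt_eqF // mul1r.
by move=> /((hI _ c0).1).
Qed.

Lemma K_ge0 r x A : D r x -> (0 <= K F H r x A)%E.
Proof.
move=> Dx; apply: sint_ge0 => xi; rewrite lee_fin; apply: mulr_ge0; first exact: F_ge0.
by rewrite /indic; case: (_ \in _).
Qed.

Lemma scl_mes c : measurable_fun setT (@scl R n c).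
Proof. exact: scl_measurable. Qed.

Lemma sclK c : 0 < c -> forall x, scl c^-1 (@scl R n c x) = x.
Proof. by move=> c0 x; rewrite /scl scalerA mulVf ?gt_eqF // scale1r. Qed.

Lemma sclVK c : 0 < c -> forall x, scl c (@scl R n c^-1 x) = x.
Proof. by move=> c0 x; rewrite /scl scalerA mulfV ?gt_eqF // scale1r. Qed.

Lemma push_inv (psi : Sph R n -> R) c : 0 < c -> Cplus psi ->
  invariant_prob D F H (fun xi => c * psi xi) (pushp (nu psi) c).
Proof.
move=> c0 Cpsi A mA.
have mpA : measurable (scl c @^-1` A).
  by rewrite -[_ @^-1` _]setTI; exact: scl_mes.
rewrite pushpE (hinv _ Cpsi _ mpA).
rewrite (@cov_eq _ _ _ _ _ (nu psi) (pushp (nu psi) c) (scl c) (scl c^-1)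
  (scl_mes c) (scl_mes c^-1) (sclK c c0) (sclVK c c0)); last 2 first.
- by move=> B mB.
- by move=> x; exact: K_ge0.
rewrite Dset //.
apply: eq_integral => x /[!inE] Dx.
rewrite /K; congr sint; apply: funext => xi.
have [_ [hF hH]] := hI _ c0.
rewrite -(hF _ _ Dx) -(hH _ Cpsi).
by [].
Qed.

Lemma bbar_scale (psi : Sph R n -> R) c xi : 0 < c -> Cplus psi ->
  bbar D F nu (fun xi => c * psi xi) xi = (((c ^+ n.-1)^-1)%:E * bbar D F nu psi xi)%E.
Proof.
move=> c0 Cpsi.
have Cc := Cplus_scale _ _ c0 Cpsi.
rewrite /bbar (eq_measure_integral (pushp (nu psi) c)); last first.
  by move=> A mA _; apply/esym/(huniq _ Cc _ (push_inv _ _ c0 Cpsi) _ mA).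
rewrite (@cov_eq _ _ _ _ _ (nu psi) (pushp (nu psi) c) (scl c) (scl c^-1)
  (scl_mes c) (scl_mes c^-1) (sclK c c0) (sclVK c c0)); last 2 first.
- by move=> B mB.
- move=> x Dx; rewrite lee_fin; apply: b_ge0 => xi'; first exact: r_gt0 Dx.
  exact: F_ge0.
rewrite Dset // -my_integralZl; last 2 first.
- by rewrite invr_gt0 exprn_gt0.
- move=> x Dx; rewrite lee_fin; apply: b_ge0 => xi'; first exact: r_gt0 Dx.
  exact: F_ge0.
apply: eq_integral => x /[!inE] Dx.
have [_ [hF _]] := hI _ c0.
rewrite /scl b_scale ?EFinM //.
- by move=> xi'; exact: r_gt0 Dx.
- by move=> xi'; exact: F_ge0.
- by move=> xi'; rewrite -hF.
Qed.
End P4.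
Arguments Cplus_scale {R n}.
Arguments F_ge0 {R n D F H}.
Arguments r_gt0 {R n D F H}.
Arguments bbar_scale {R n D F H nu}.


Section P5.
Context (R : realType).
Variables (L : R) (L0 : 0 < L).
Let u (s : R) := 1 + s / L.

Lemma u_der (s : R) : is_derive s 1 u L^-1.
Proof.
rewrite /u.
apply: is_derive_eq.
by rewrite scaler0 !add0r mul1r -[RHS]mulr1.
Qed.

Lemma g_der (q s : R) : 0 < u s -> is_derive s 1 (fun s => powR (u s) q) (q * (u s) `^ (q - 1) * L^-1).
Proof.
move=> us.
have du : derivable u s 1 by apply: ex_derive; exact: u_der.
have dg : derivable (@powR R ^~ q) (u s) 1 by apply: (@derivable_powR R 1 q (u s)); rewrite in_itv /= us.
split.
  apply/derivable1_diffP; apply: (@differentiable_comp _ _ _ _ u (@powR R ^~ q)).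
    exact/derivable1_diffP.
  exact/derivable1_diffP.
rewrite -derive1E (derive1_comp du dg) powR_derive1; last by rewrite in_itv /= us.
by rewrite derive1E (@derive_val _ _ _ _ _ _ _ (u_der s)).
Qed.

Lemma u_gt0 s : 0 <= s -> 0 < u s.
Proof. by move=> s0; rewrite /u ltr_wpDr // divr_ge0 // ltW. Qed.

Lemma ftc_formula (m : nat) (a t : R) : (0 < m)%N -> 0 < t ->
  (\int[lebesgue_measure]_(s in [set s : R | (0 <= s <= t)%R])
     ((((powR (u s) m%:R^-1) ^+ m.-1)^-1 * a)%:E) =
   ((m%:R * L * (powR (u t) m%:R^-1 - 1)) * a)%:E)%E.
Proof.
move=> m0 t0.
set p := m%:R^-1.
have mR : m%:R != 0 :> R by rewrite pnatr_eq0 -lt0n.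
have key s : 0 <= s -> ((powR (u s) p) ^+ m.-1)^-1 * a = a * powR (u s) (p - 1).
  move=> s0.
  rewrite -powR_mulrn ?powR_ge0 // -powRrM -powRN mulrC; congr (_ * powR _ _).
  rewrite /p; clear p; move: mR; case: m m0 => // k _ mR.
  rewrite /=; move: mR; rewrite -natr1 => mR.
  field.
  by [].
have -> : [set s : R | (0 <= s <= t)%R] = `[0, t]%classic.
  by apply/seteqP; split => s /=; rewrite in_itv.
transitivity (\int[lebesgue_measure]_(s in `[0%R, t]) (a * powR (u s) (p - 1))%:E)%E.
  apply: eq_integral => s /[!inE] /=; rewrite in_itv /= => /andP[s0 _]; by rewrite key.
set k := m%:R * L * a.
pose G s := powR (u s) p * k.
have dg q s : 0 < u s -> derivable (fun s => powR (u s) q) s 1.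
  by move=> us; have [] := g_der q s us.
have Gd s : 0 < u s -> derivable G s 1.
  move=> us; apply: derivableM => //; exact: dg.
have G' s : 0 < u s -> (G^`())%classic s = a * powR (u s) (p - 1).
  move=> us; rewrite /G derive1Mr; last exact: dg.
  rewrite derive1E (@derive_val _ _ _ _ _ _ _ (g_der p s us)) /k /p.
  by field; rewrite mR andbT gt_eqF.
have Gc s : 0 < u s -> {for s, continuous G}.
  by move=> us; apply: differentiable_continuous; apply/derivable1_diffP; exact: Gd.
rewrite (@continuous_FTC2 _ _ G) //.
- rewrite /G /u mul0r addr0 powR1 -EFinB; congr EFin.
  rewrite /k; ring.
- apply: derivable_within_continuous => s /[!in_itv] /= /andP[s0 _].
  apply: derivableM => //; exact: dg _ _ (u_gt0 _ s0).
- split.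
  + move=> s /[!in_itv] /= /andP[s0 _]; exact: Gd _ (u_gt0 _ (ltW s0)).
  + apply: cvg_at_right_filter; exact: Gc _ (u_gt0 _ (lexx 0)).
  + apply: cvg_at_left_filter; exact: Gc _ (u_gt0 _ (ltW t0)).
- move=> s /[!in_itv] /= /andP[s0 _]; exact: G' _ (u_gt0 _ (ltW s0)).
Qed.
End P5.

Lemma meas_seg (R : realType) (t : R) : 0 <= t ->
  (lebesgue_measure [set s : R | (0 <= s <= t)%R] = t%:E)%E.
Proof.
move=> t0.
have -> : [set s : R | (0 <= s <= t)%R] = `[0%R, t]%classic.
  by apply/seteqP; split => s /=; rewrite in_itv.
rewrite lebesgue_measure_itv /= lte_fin.
case: ltP => [_|]; first by rewrite sube0.
by move=> tle; have -> : t = 0 by apply/le_anti; rewrite tle t0.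

Qed.

Lemma meas_seg_m (R : realType) (t : R) : measurable [set s : R | (0 <= s <= t)%R].
Proof.
have -> : [set s : R | (0 <= s <= t)%R] = `[0%R, t]%classic.
  by apply/seteqP; split => s /=; rewrite in_itv.
exact: measurable_itv.
Qed.

Lemma int_seg0 (R : realType) (f : R -> \bar R) :
  (\int[lebesgue_measure]_(s in [set s : R | (0 <= s <= 0)%R]) f s = 0)%E.
Proof.
transitivity (\int[lebesgue_measure]_(s in [set s : R | (0 <= s <= 0)%R]) (cst (f 0%R)) s)%E.
  apply: eq_integral => s; rewrite inE /= => /andP[s0 s0'].
  by have -> : s = 0%R by apply/le_anti; rewrite s0 s0'.
rewrite (@integral_cst _ _ _ lebesgue_measure _ (@meas_seg_m R 0%R)).
set m := (X in (_ * X)%E).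
have -> : m = 0%:E by exact: meas_seg.
by rewrite mule0.
Qed.

Lemma int_segc (R : realType) (t : R) (f : R -> \bar R) (k : \bar R) : (0 <= t)%R ->
  (forall s, (0 <= s <= t)%R -> f s = k) ->
  (\int[lebesgue_measure]_(s in [set s : R | (0 <= s <= t)%R]) f s = k * t%:E)%E.
Proof.
move=> t0 hf.
transitivity (\int[lebesgue_measure]_(s in [set s : R | (0 <= s <= t)%R]) (cst k) s)%E.
  by apply: eq_integral => s; rewrite inE /= => /hf.
rewrite (@integral_cst _ _ _ lebesgue_measure _ (@meas_seg_m R t)).
set m := (X in (_ * X)%E).
by have -> : m = t%:E by exact: meas_seg.
Qed.


Theorem proposition3p3 (R : realType) (n : nat) (hn : (2 <= n)%N)
    (D : (Sph R n -> R) -> 'rV[R]_n -> Prop)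
    (F : (Sph R n -> R) -> 'rV[R]_n -> Sph R n -> R)
    (H : (Sph R n -> R) -> Sph R n -> 'rV[R]_n)
    (nu : (Sph R n -> R) -> probability (Rn R n) R) :
  rules D F H ->
  (forall r, Cplus r -> invariant_prob D F H r (nu r)) ->
  (forall r, Cplus r -> forall mu : probability (Rn R n) R,
      invariant_prob D F H r mu -> forall A, measurable A -> mu A = nu r A) ->
  assumptionI D F H ->
  forall psi : Sph R n -> R, Cplus psi ->
    (invariant_ode (bbar D F nu) psi <->
     forall xi, bbar D F nu psi xi = (psi xi / (n%:R * Leb psi))%:E).
Proof.
move=> hrules hinv huniq hI psi Cpsi.
have n0 : (0 < n)%N by apply: leq_trans hn.
have nR : n%:R != 0 :> R by rewrite pnatr_eq0 -lt0n.
have L0 : 0 <= Leb psi.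
  apply: fine_ge0; apply: mule_ge0; first by rewrite lee_fin invr_ge0.
  apply: sint_ge0 => xi; rewrite lee_fin exprn_ge0 // ltW //; exact: Cpsi.2.
have bb0 r xi : Cplus r -> (0 <= bbar D F nu r xi)%E.
  move=> Cr; apply: integral_ge0 => x Dx; rewrite lee_fin.
  apply: b_ge0 => xi'; first exact: (r_gt0 hrules _ _ _ Dx).
  exact: (F_ge0 hrules _ _ _ Dx).
rewrite /invariant_ode /is_solution.
set L := Leb psi in L0 *.
set ct := fun t => powR (1 + t / L) n%:R^-1.
have ct_gt0 t : 0 <= t -> 0 < ct t.
  move=> t0; apply: powR_gt0; rewrite ltr_wpDr // divr_ge0 //.
have ct0 : ct 0 = 1 by rewrite /ct mul0r addr0 powR1.
have part1 : (fun xi => ct 0 * psi xi) = psi by apply: funext => xi; rewrite ct0 mul1r.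
have part2 t : 0 <= t -> Cplus (fun xi => ct t * psi xi).
  by move=> t0; apply: Cplus_scale => //; exact: ct_gt0.
suff E : (forall t, 0 <= t -> forall xi, (((ct t * psi xi)%R)%:E = (psi xi)%:E +
   \int[lebesgue_measure]_(s in [set s : R | (0 <= s <= t)%R])
       bbar D F nu (fun xi => (ct s * psi xi)%R) xi)%E) <->
   (forall xi, bbar D F nu psi xi = (psi xi / (n%:R * L))%:E).
  split; first by move=> [_ [_ h3]]; apply/E; exact: h3.
  by move=> h; split; [exact: part1 | split; [exact: part2 | exact: (proj2 E h)]].
case: (ltgtP L 0) => [Ln|Lp|L00]; first by move: L0; rewrite leNgt Ln.
  have bbs s xi : 0 <= s -> bbar D F nu (fun xi => (ct s * psi xi)%R) xi =
      (((ct s ^+ n.-1)^-1)%:E * bbar D F nu psi xi)%E.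
    by move=> s0; apply: (bbar_scale hrules hinv huniq hI); [exact: ct_gt0|exact: Cpsi].
  have intE t xi :
      (\int[lebesgue_measure]_(s in [set s : R | (0 <= s <= t)%R])
         bbar D F nu (fun xi => (ct s * psi xi)%R) xi =
       \int[lebesgue_measure]_(s in [set s : R | (0 <= s <= t)%R])
         (((ct s ^+ n.-1)^-1)%:E * bbar D F nu psi xi))%E.
    by apply: eq_integral => s; rewrite inE /= => /andP[s0 _]; exact: bbs.
  have ftc a t : 0 < t ->
      (\int[lebesgue_measure]_(s in [set s : R | (0 <= s <= t)%R])
         (((ct s ^+ n.-1)^-1)%:E * a%:E) =
       ((n%:R * L * (ct t - 1)) * a)%:E)%E.
    move=> t0; rewrite -(@ftc_formula R L Lp n a t n0 t0).
    by apply: eq_integral => s _; rewrite -EFinM.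
  split.
    move=> h xi; have := h 1 ler01 xi; rewrite intE.
    move: (bb0 psi xi Cpsi); case: (bbar D F nu psi xi) => [r||] // _.
      rewrite ftc // => /eqP; rewrite -EFinD eqe => /eqP h1.
      congr EFin.
      set c1 := ct 1 in h1.
      have hc : c1 - 1 != 0.
        rewrite subr_eq0 /c1 /ct powR_eq1 negb_or negb_or; apply/and3P; split.
        - by rewrite -subr_eq0 addrAC subrr add0r mul1r invr_eq0 gt_eqF.
        - by rewrite -leNgt addr_ge0 // divr_ge0 // ltW.
        - by rewrite invr_eq0.
      have h2 : (c1 - 1) * (psi xi - n%:R * L * r) = 0.
        have -> : (c1 - 1) * (psi xi - n%:R * L * r) =
                  c1 * psi xi - (psi xi + n%:R * L * (c1 - 1) * r) by ring.
        by rewrite -h1 subrr.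
      move/eqP: h2; rewrite mulf_eq0 (negbTE hc) /= subr_eq0 => /eqP ->.
      by field; rewrite nR gt_eqF.
    rewrite (@int_segc R 1 _ +oo%E ler01) //; last first.
      move=> s /andP[s0 _]; rewrite gt0_muley // lte_fin invr_gt0 exprn_gt0 //.
      exact: ct_gt0.
    by rewrite mule1 addey.
  move=> h t t0 xi; rewrite intE h.
  case: (ltgtP t 0) => [tn|tp|->]; first by move: t0; rewrite leNgt tn.
    rewrite (ftc _ _ tp) -EFinD; congr EFin.
    by field; rewrite nR gt_eqF.
  by rewrite int_seg0 adde0 ct0 mul1r.
have ctE t : ct t = 1 by rewrite /ct L00 invr0 mulr0 addr0 powR1.
have rtE t : (fun xi => (ct t * psi xi)%R) = psi.
  by apply: funext => xi; rewrite ctE mul1r.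
split.
  move=> h xi; have := h 1 ler01 xi; rewrite ctE mul1r.
  under eq_integral do rewrite rtE.
  rewrite (@int_segc R 1 _ (bbar D F nu psi xi) ler01) // mule1.
  rewrite L00 mulr0 invr0 mulr0.
  move: (bb0 psi xi Cpsi); case: (bbar D F nu psi xi) => [r||] //.
  move=> _ /eqP; rewrite -EFinD eqe => /eqP h1.
  by congr EFin; apply/(addrI (psi xi)); rewrite -h1 addr0.
move=> h t t0 xi; rewrite ctE mul1r.
under eq_integral do rewrite rtE.
rewrite h L00 mulr0 invr0 mulr0 integral0_eq ?adde0 //.
Qed.
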